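(* Let $n,m,p,N\in\mathbb{N}_+$, $B\in\mathbb{R}^{n\times m}$, $C\in\mathbb{R}^{p\times n}$ of full column rank, $x_0\in\mathbb{R}^n$, $r_1,\dots,r_N\in\mathbb{R}^p$, $r_0:=Cx_0$, $\lambda_1,\lambda_2,\lambda_3\ge0$, functions $f_1,f_2,f_3$ and a set $\mathcal{S}\subseteq\mathbb{R}^{n\times n}\times\mathbb{R}^{m\times N}\times\mathbb{R}_+$. Consider problem (AMOPUL): minimize $\lambda_1f_1(A)+\lambda_2f_2(U)+\lambda_3f_3(\omega)$ over $A\in\mathbb{R}^{n\times n}$, $U=(u_0,\dots,u_{N-1})\in\mathbb{R}^{m\times N}$, $\omega\in\mathbb{R}_+$ subject to $\sum_{t=1}^N\|CAC^{\dagger}r_{t-1}+CBu_{t-1}-r_t\|_2\le\omega$ and $(A,U,\omega)\in\mathcal{S}$. Suppose there exist $\beta>0$ and $\omega^{\rm u}>0$ such that $\|CA^{\rm a}C^{\dagger}\|_2\le\beta$ and $\omega^{\rm a}\le\omega^{\rm u}$ for every feasible solution $(A^{\rm a},U^{\rm a},\omega^{\rm a})$ of (AMOPUL). Then for each optimal solution $(A^{\rm a*},U^{\rm a*},\omega^{\rm a*})$ of (AMOPUL), with $U^{\rm a*}=(u^{\rm a*}_0,\dots,u^{\rm a*}_{N-1})$, defining $x_t=A^{\rm a*}x_{t-1}+Bu^{\rm a*}_{t-1}$ and $y_t=Cx_t$ for $t=1,\dots,N$, we have $$\sum_{t=1}^N\|y_t-r_t\|_2\le\Big(\sum_{i=0}^{N-1}\beta^i\Big)\omega^{\rm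 u}.$$
   Context: $C^{\dagger}$ is the Moore–Penrose inverse of $C$; $\|\cdot\|_2$ denotes the Euclidean norm for vectors and the spectral norm (largest singular value) for matrices. In the paper $f_1,f_2,f_3$ and $\mathcal{S}$ are assumed SD representable (convex and expressible by linear matrix inequalities), though this is not used in the claim. *)

(* Defs.v *)
From HB Require Import structures.
From mathcomp Require Import all_boot all_order all_algebra.
From mathcomp Require Import classical_sets reals.
Set Implicit Arguments. Unset Strict Implicit. Unset Printing Implicit Defensive.
Import Order.TTheory GRing.Theory Num.Theory.
Local Open Scope ring_scope.
Local Open Scope classical_set_scope.

Section Defs.
Variable R : realType.

Definition norm2 (k : nat) (v : 'cV[R]_k) : R :=
  Num.sqrt (\sum_(i < k) v i 0 ^+ 2).

Definition specnorm (a b : nat) (M : 'M[R]_(a, b)) : R :=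
  sup [set y | exists x : 'cV[R]_b, norm2 x <= 1 /\ y = norm2 (M *m x)].

Definition is_pinv (a b : nat) (C : 'M[R]_(a, b)) (X : 'M[R]_(b, a)) : Prop :=
  [/\ C *m X *m C = C, X *m C *m X = X,
      (C *m X)^T = C *m X & (X *m C)^T = X *m C].

(* column u_t of U (0 outside range) *)
Definition ucol (m N : nat) (U : 'M[R]_(m, N)) (t : nat) : 'cV[R]_m :=
  if @insub nat (fun k => k < N)%N _ t is Some i then col i U else 0.

Fixpoint traj (n m N : nat) (A : 'M[R]_n) (B : 'M[R]_(n, m))
  (U : 'M[R]_(m, N)) (x0 : 'cV[R]_n) (t : nat) : 'cV[R]_n :=
  match t with
  | 0%N => x0
  | t'.+1 => A *m traj A B U x0 t' + B *m ucol U t'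
  end.

Definition amopul_feasible (n m p N : nat) (B : 'M[R]_(n, m)) (C : 'M[R]_(p, n))
  (Cd : 'M[R]_(n, p)) (r : nat -> 'cV[R]_p)
  (S : 'M[R]_n -> 'M[R]_(m, N) -> R -> Prop)
  (A : 'M[R]_n) (U : 'M[R]_(m, N)) (w : R) : Prop :=
  [/\ 0 <= w,
      \sum_(t < N) norm2 (C *m A *m Cd *m r t + C *m B *m col t U - r t.+1) <= w
    & S A U w].

Definition amopul_optimal (n m p N : nat) (B : 'M[R]_(n, m)) (C : 'M[R]_(p, n))
  (Cd : 'M[R]_(n, p)) (r : nat -> 'cV[R]_p)
  (S : 'M[R]_n -> 'M[R]_(m, N) -> R -> Prop)
  (l1 l2 l3 : R) (f1 : 'M[R]_n -> R) (f2 : 'M[R]_(m, N) -> R) (f3 : R -> R)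
  (A : 'M[R]_n) (U : 'M[R]_(m, N)) (w : R) : Prop :=
  amopul_feasible B C Cd r S A U w /\
  forall A' U' w', amopul_feasible B C Cd r S A' U' w' ->
    l1 * f1 A + l2 * f2 U + l3 * f3 w <= l1 * f1 A' + l2 * f2 U' + l3 * f3 w'.

End Defs.

(* Main.v *)
Require Import Defs.
From HB Require Import structures.
From mathcomp Require Import all_boot all_order all_algebra.
From mathcomp Require Import classical_sets reals.
From mathcomp Require Import ring lra.
Set Implicit Arguments. Unset Strict Implicit. Unset Printing Implicit Defensive.
Import Order.TTheory GRing.Theory Num.Theory.
Local Open Scope ring_scope.

Section N.
Variable R : realType.

Lemma norm2_ge0 k (v : 'cV[R]_k) : 0 <= norm2 v.
Proof. exact: sqrtr_ge0. Qed.

Lemma sumsq_ge0 k (v : 'cV[R]_k) : 0 <= \sum_(i < k) v i 0 ^+ 2.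
Proof. by apply: sumr_ge0 => i _; rewrite sqr_ge0. Qed.

Lemma norm2_sq k (v : 'cV[R]_k) : norm2 v ^+ 2 = \sum_(i < k) v i 0 ^+ 2.
Proof. by rewrite sqr_sqrtr // sumsq_ge0. Qed.

Lemma norm2_eq0 k (v : 'cV[R]_k) : norm2 v = 0 -> forall i, v i 0 = 0.
Proof.
move=> h i; have : \sum_(i < k) v i 0 ^+ 2 = 0 by rewrite -norm2_sq h expr0n.
move/psumr_eq0P => H; apply/eqP; rewrite -sqrf_eq0; apply/eqP; apply: H => // j _.
exact: sqr_ge0.
Qed.

Lemma cs k (u v : 'cV[R]_k) :
  \sum_(i < k) u i 0 * v i 0 <= norm2 u * norm2 v.
Proof.
set a := norm2 u; set b := norm2 v.
have [a0|a0] := eqVneq a 0.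
  rewrite a0 mul0r big1 // => i _; by rewrite (norm2_eq0 a0 i) mul0r.
have [b0|b0] := eqVneq b 0.
  rewrite b0 mulr0 big1 // => i _; by rewrite (norm2_eq0 b0 i) mulr0.
have ha : 0 < a by rewrite lt_def a0 norm2_ge0.
have hb : 0 < b by rewrite lt_def b0 norm2_ge0.
have H : 0 <= \sum_(i < k) (b * u i 0 - a * v i 0) ^+ 2.
  by apply: sumr_ge0 => i _; rewrite sqr_ge0.
have E : \sum_(i < k) (b * u i 0 - a * v i 0) ^+ 2 =
   b^+2 * (\sum_(i < k) u i 0 ^+ 2) + a^+2 * (\sum_(i < k) v i 0 ^+ 2)
     - 2 * (a * b) * \sum_(i < k) u i 0 * v i 0.
  rewrite !mulr_sumr -!big_split /= -sumrB.
  by apply: eq_bigr => i _; ring.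
rewrite E -!norm2_sq -/a -/b subr_ge0 in H.
have hab : 0 < 2 * (a * b) by rewrite mulr_gt0 // mulr_gt0.
rewrite -(ler_pM2l hab); apply: le_trans H _.
rewrite le_eqVlt; apply/orP; left; apply/eqP; ring.
Qed.

Lemma norm2_tri k (u v : 'cV[R]_k) : norm2 (u + v) <= norm2 u + norm2 v.
Proof.
have h0 : 0 <= norm2 u + norm2 v by rewrite addr_ge0 // norm2_ge0.
rewrite -(ger0_norm h0) -sqrtr_sqr /norm2 ler_sqrt; last by rewrite sqr_ge0.
have -> : \sum_(i < k) (u + v) i 0 ^+ 2 =
   \sum_(i < k) u i 0 ^+ 2 + \sum_(i < k) v i 0 ^+ 2 + 2 * \sum_(i < k) u i 0 * v i 0.
  rewrite mulr_sumr -!big_split /=; apply: eq_bigr => i _; rewrite mxE; ring.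
rewrite -/(norm2 u) -/(norm2 v) -!norm2_sq; have := cs u v => H; nra.
Qed.

Lemma norm2_scale k c (v : 'cV[R]_k) : norm2 (c *: v) = `|c| * norm2 v.
Proof.
rewrite /norm2 (_ : \sum_(i < k) (c *: v) i 0 ^+ 2 = c ^+ 2 * \sum_(i < k) v i 0 ^+ 2).
  by rewrite sqrtrM ?sqr_ge0 // sqrtr_sqr.
by rewrite mulr_sumr; apply: eq_bigr => i _; rewrite mxE exprMn.
Qed.

Lemma norm2_0 k : norm2 (0 : 'cV[R]_k) = 0.
Proof. by rewrite /norm2 big1 ?sqrtr0 // => i _; rewrite mxE expr0n. Qed.

Lemma coord_le k (v : 'cV[R]_k) i : `|v i 0| <= norm2 v.
Proof.
rewrite -sqrtr_sqr /norm2 ler_sqrt ?sumsq_ge0 // (bigD1 i) //= lerDl.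
by apply: sumr_ge0 => j _; rewrite sqr_ge0.
Qed.

Lemma sumsq_le k (a : 'I_k -> R) : (forall i, 0 <= a i) ->
  \sum_(i < k) a i ^+ 2 <= (\sum_(i < k) a i) ^+ 2.
Proof.
move=> ha.
have : (\sum_(i < k) a i ^+ 2 <= (\sum_(i < k) a i) ^+ 2) /\ 0 <= \sum_(i < k) a i.
  apply: (big_ind2 (fun x y => x <= y ^+ 2 /\ 0 <= y)).
  - by rewrite expr0n.
  - move=> y1 y2 z1 z2 [h1 h2] [h3 h4]; split; [nra | exact: addr_ge0].
  - by move=> i _; split.
by case.
Qed.

Lemma l1_le k (v : 'cV[R]_k) : norm2 v <= \sum_(i < k) `|v i 0|.
Proof.
have h0 : 0 <= \sum_(i < k) `|v i 0| by apply: sumr_ge0.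
rewrite -(ger0_norm h0) -sqrtr_sqr /norm2 ler_sqrt ?sqr_ge0 //.
rewrite (eq_bigr (fun i => `|v i 0| ^+ 2)); last by move=> i _; rewrite real_normK ?num_real.
by apply: sumsq_le.
Qed.

Lemma opnorm_bnd a b (M : 'M[R]_(a, b)) (x : 'cV[R]_b) : norm2 x <= 1 ->
  norm2 (M *m x) <= \sum_(i < a) \sum_(j < b) `|M i j|.
Proof.
move=> hx; apply: le_trans (l1_le _) _; apply: ler_sum => i _.
rewrite mxE; apply: le_trans (ler_norm_sum _ _ _) _; apply: ler_sum => j _.
rewrite normrM -[X in _ <= X]mulr1 ler_wpM2l //.
exact: le_trans (coord_le _ _) hx.
Qed.


Lemma op_le a b (M : 'M[R]_(a, b)) beta : specnorm M <= beta ->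
  forall v, norm2 (M *m v) <= beta * norm2 v.
Proof.
move=> hM v.
have [v0|v0] := eqVneq (norm2 v) 0.
  have -> : v = 0 by apply/matrixP => i j; rewrite ord1 mxE; exact: norm2_eq0 v0 i.
  by rewrite mulmx0 norm2_0 norm2_0 mulr0.
have hv : 0 < norm2 v by rewrite lt_def v0 norm2_ge0.
set c := (norm2 v)^-1.
have hc : 0 < c by rewrite invr_gt0.
have hx : norm2 (c *: v) = 1 by rewrite norm2_scale gtr0_norm // mulVf.
have : norm2 (M *m (c *: v)) <= specnorm M.
  apply: ub_le_sup.
    exists (\sum_(i < a) \sum_(j < b) `|M i j|) => y [x [hx' ->]]; exact: opnorm_bnd.
  by exists (c *: v); split => //; rewrite hx.
rewrite -scalemxAr norm2_scale gtr0_norm // => h.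
have := le_trans h hM; rewrite mulrC ler_pdivrMr //.
Qed.

Lemma G_mono (beta : R) : 0 <= beta -> forall j l, (j <= l)%N ->
  \sum_(i < j) beta ^+ i <= \sum_(i < l) beta ^+ i.
Proof.
move=> hb j; elim => [|l IH]; first by rewrite leqn0 => /eqP ->.
rewrite leq_eqVlt => /orP [/eqP -> //| hl].
by rewrite big_ord_recr /= ler_wpDr ?exprn_ge0 // IH.
Qed.

Lemma rec_bnd (beta : R) (E d : nat -> R) N : 0 <= beta -> E 0%N = 0 ->
  (forall k, 0 <= d k) -> (forall k, E k.+1 <= beta * E k + d k) ->
  \sum_(t < N) E t.+1 <= (\sum_(i < N) beta ^+ i) * \sum_(t < N) d t.
Proof.
move=> hb hE0 hd hrec.
pose G j := \sum_(i < j) beta ^+ i.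
have Gge0 : forall j, 0 <= G j by move=> j; apply: sumr_ge0 => i _; rewrite exprn_ge0.
have claim : forall k, (k <= N)%N ->
  \sum_(t < k) E t.+1 + beta * G (N - k)%N * E k <= G N * \sum_(t < k) d t.
  elim => [|k IH] hk.
    by rewrite !big_ord0 hE0 !mulr0 addr0.
  have hkN : (k < N)%N by exact: hk.
  have {IH} IH := IH (ltnW hk).
  have eNk : (N - k = (N - k.+1).+1)%N by rewrite subnSK.
  rewrite eNk in IH.
  set j := (N - k.+1)%N in IH *.
  have GS : G j.+1 = 1 + beta * G j.
    by rewrite /G big_ord_recl expr0 mulr_sumr; congr (_ + _); apply: eq_bigr => i _; rewrite exprS.
  have GN : G j.+1 <= G N by apply: G_mono => //; rewrite /j -eNk leq_subr.
  rewrite GS in IH GN.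
  rewrite !big_ord_recr /=.
  have h0 : 0 <= 1 + beta * G j by rewrite addr_ge0 // mulr_ge0.
  have h1 := ler_wpM2l h0 (hrec k).
  have h2 : (1 + beta * G j) * d k <= G N * d k by rewrite ler_wpM2r.
  have h3 : 0 <= G j := Gge0 j.
  nra.
have := claim N (leqnn N); rewrite subnn /G big_ord0 mulr0 mul0r addr0 //.
Qed.
End N.
Theorem theorem2 (R : realType) (n m p N : nat)
  (hn : (0 < n)%N) (hm : (0 < m)%N) (hp : (0 < p)%N) (hN : (0 < N)%N)
  (B : 'M[R]_(n, m)) (C : 'M[R]_(p, n)) (hC : \rank C = n)
  (Cd : 'M[R]_(n, p)) (hCd : is_pinv C Cd)
  (x0 : 'cV[R]_n) (r : nat -> 'cV[R]_p) (hr0 : r 0%N = C *m x0)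
  (l1 l2 l3 : R) (hl1 : 0 <= l1) (hl2 : 0 <= l2) (hl3 : 0 <= l3)
  (f1 : 'M[R]_n -> R) (f2 : 'M[R]_(m, N) -> R) (f3 : R -> R)
  (S : 'M[R]_n -> 'M[R]_(m, N) -> R -> Prop)
  (beta wu : R) (hbeta : 0 < beta) (hwu : 0 < wu)
  (hbound : forall A U w, amopul_feasible B C Cd r S A U w ->
       specnorm (C *m A *m Cd) <= beta /\ w <= wu)
  (As : 'M[R]_n) (Us : 'M[R]_(m, N)) (ws : R)
  (hopt : amopul_optimal B C Cd r S l1 l2 l3 f1 f2 f3 As Us ws) :
  \sum_(t < N) norm2 (C *m traj As B Us x0 t.+1 - r t.+1)
    <= (\sum_(i < N) beta ^+ i) * wu.
Proof.
have hCdC : Cd *m C = 1%:M.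
  have : row_full C by rewrite /row_full hC.
  case/row_fullP => D hD; case: hCd => h1 _ _ _.
  transitivity (D *m C *m (Cd *m C)); first by rewrite hD mul1mx.
  by rewrite mulmxA -(mulmxA D C Cd) -mulmxA h1 hD.
case: (hopt) => hfeas _.
have [hM hw] := hbound _ _ _ hfeas.
case: hfeas => _ hsum _.
set M := C *m As *m Cd.
pose E t := norm2 (C *m traj As B Us x0 t - r t).
pose d t := norm2 (C *m As *m Cd *m r t + C *m B *m ucol Us t - r t.+1).
have hucol : forall t : 'I_N, ucol Us t = col t Us.
  move=> t; rewrite /ucol; case: insubP => [i _ /val_inj -> //|].
  by rewrite ltn_ord.
have hdsum : \sum_(t < N) d t <= wu.
  apply: le_trans hw; apply: le_trans hsum.
  by rewrite le_eqVlt; apply/orP; left; apply/eqP; apply: eq_bigr => t _; rewrite /d hucol.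
have hbeta0 : 0 <= beta by apply: ltW.
have := @rec_bnd R beta E d N hbeta0.
move=> H; apply: le_trans (H _ _ _) _.
- by rewrite /E /= hr0 subrr norm2_0.
- by move=> k; apply: norm2_ge0.
- move=> k; rewrite /E /d.
  have -> : C *m traj As B Us x0 k.+1 - r k.+1 =
     M *m (C *m traj As B Us x0 k - r k) +
     (C *m As *m Cd *m r k + C *m B *m ucol Us k - r k.+1).
    rewrite /= mulmxDr mulmxBr /M !mulmxA -(mulmxA (C *m As) Cd C) hCdC mulmx1.
    by rewrite !addrA subrK.
  apply: le_trans (norm2_tri _ _) _; rewrite lerD2r.
  exact: op_le.
- rewrite ler_wpM2l //; apply: sumr_ge0 => i _; exact: exprn_ge0.
Qed.
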